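(* Let $K\ge2$, $N\ge1$, $z^\star\in\{1,\dots,K\}^N$, let $P^\star$ be a real $K\times K$ matrix, and let $X=(X_{ij})_{i,j\le N}$ be a random matrix with integrable entries satisfying $\mathbb{E}[X_{ij}]=P^\star_{z^\star_iz^\star_j}$ for all $i,j$. Then for every deterministic $z\in\{1,\dots,K\}^N$, $$\Delta_N(z^\star,z)\,\overline{\delta}(z)\le\frac{2K}{K-1}\,\overline L_N(z),$$ so in particular $\Delta_N(z^\star,z)\le\frac{2K}{(K-1)\overline\delta(z)}\overline L_N(z)$ whenever $\overline\delta(z)>0$. Moreover $\overline L_N(z^\star)=0$.
   Context: Notation: $I_p(z)=\{i: z_i=p\}$, $N_p(z)=|I_p(z)|$. $\widehat\mu_{iq}(z)=\frac{1}{N_q(z)}\sum_{j\in I_q(z)}X_{ij}$ if $N_q(z)\ne0$, else $0$; $\widehat\nu_{pj}(z)=\frac{1}{N_p(z)}\sum_{i\in I_p(z)}X_{ij}$ if $N_p(z)\ne0$, else $0$; $\widehat P_{pq}(z)=\frac{1}{N_p(z)N_q(z)}\sum_{i\in I_p(z)}\sum_{j\in I_q(z)}X_{ij}$ if $N_p(z)N_q(z)\ne0$, else $0$. For deterministic $z$: $\overline\mu_{iq}(z)=\mathbb{E}[\widehat\mu_{iq}(z)]$, $\overline\nu_{qi}(z)=\mathbb{E}[\widehat\nu_{qi}(z)]$, $\overline P_{pq}(z)=\mathbb{E}[\widehat P_{pq}(z)]$. $\overline L_N(z)=\frac1N\sum_{i=1}^N\sum_{q=1}^K\big(|\overline\mu_{iq}(z)-\overline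 P_{z_iq}(z)|+|\overline\nu_{qi}(z)-\overline P_{qz_i}(z)|\big)$. $\overline{\delta}(z)=\min_{p_1\ne p_2}\max_q\big(|\overline P_{p_1q}(z)-\overline P_{p_2q}(z)|+|\overline P_{qp_1}(z)-\overline P_{qp_2}(z)|\big)$. $\Delta_N(z,z')=\frac{K}{N^2(K-1)}\sum_{i,j=1}^N\mathbb{1}_{z_i=z_j}\mathbb{1}_{z'_i\neq z'_j}$. *)

(* Defs.v *)
From HB Require Import structures.
From mathcomp Require Import all_boot all_order all_algebra.
From mathcomp Require Import all_classical all_reals all_analysis.
Set Implicit Arguments. Unset Strict Implicit. Unset Printing Implicit Defensive.
Import Order.TTheory GRing.Theory Num.Theory.
Local Open Scope ring_scope.

Section SBM.
Variables (R : realType) (d : measure_display) (T : measurableType d)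
  (P : probability T R) (K N : nat).

Definition Ip (z : 'I_N -> 'I_K) (p : 'I_K) := [set i : 'I_N | z i == p].
Definition Np (z : 'I_N -> 'I_K) (p : 'I_K) : nat := #|Ip z p|.

Variable X : 'I_N -> 'I_N -> T -> R.

Definition hmu (z : 'I_N -> 'I_K) (i : 'I_N) (q : 'I_K) : T -> R :=
  fun w => if Np z q != 0%N
           then (Np z q)%:R^-1 * \sum_(j in Ip z q) X i j w else 0.
Definition hnu (z : 'I_N -> 'I_K) (p : 'I_K) (j : 'I_N) : T -> R :=
  fun w => if Np z p != 0%N
           then (Np z p)%:R^-1 * \sum_(i in Ip z p) X i j w else 0.
Definition hP (z : 'I_N -> 'I_K) (p q : 'I_K) : T -> R :=
  fun w => if (Np z p * Np z q != 0)%N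
           then ((Np z p)%:R * (Np z q)%:R)^-1 *
                \sum_(i in Ip z p) \sum_(j in Ip z q) X i j w else 0.

Definition Er (Y : T -> R) : R := fine ('E_P[Y])%E.

Definition bmu z i q := Er (hmu z i q).
Definition bnu z q i := Er (hnu z q i).
Definition bP z p q := Er (hP z p q).

Definition barL (z : 'I_N -> 'I_K) : R :=
  N%:R^-1 * \sum_(i < N) \sum_(q < K)
     (`|bmu z i q - bP z (z i) q| + `|bnu z q i - bP z q (z i)|).

Definition finmax (s : seq R) : R := foldr Num.max (head 0 s) s.
Definition finmin (s : seq R) : R := foldr Num.min (head 0 s) s.

Definition bdelta (z : 'I_N -> 'I_K) : R :=
  finmin [seq finmax [seq `|bP z pr.1 q - bP z pr.2 q| + `|bP z q pr.1 - bP z q pr.2|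
                     | q <- enum 'I_K]
         | pr <- enum [pred pr : 'I_K * 'I_K | pr.1 != pr.2]].

End SBM.

Definition DeltaN (K N : nat) (z z' : 'I_N -> 'I_K) {R : realType} : R :=
  K%:R / (N%:R ^+ 2 * (K%:R - 1)) *
  \sum_(i < N) \sum_(j < N) ((z i == z j) && (z' i != z' j))%:R.

(* Main.v *)
Require Import Defs.
From HB Require Import structures.
From mathcomp Require Import all_boot all_order all_algebra.
From mathcomp Require Import all_classical all_reals all_analysis.
From mathcomp Require Import ring lra.
Import Order.TTheory GRing.Theory Num.Theory.
Local Open Scope ring_scope.

Section E.
Context (R : realType) (d : measure_display) (T : measurableType d)
  (P : probability T R).

Lemma Esum_seq (I : Type) (s : seq I) (Pr : pred I) (f : I -> T -> R) (m : I -> R) :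
  (forall j, f j \in Lfun P 1) -> (forall j, ('E_P[f j] = (m j)%:E)%E) ->
  (fun w => \sum_(j <- s | Pr j) f j w) \in Lfun P 1 /\
  ('E_P[fun w => (\sum_(j <- s | Pr j) f j w)%R] = (\sum_(j <- s | Pr j) m j)%:E)%E.
Proof.
move=> hf hm; elim: s => [|a s [IH1 IH2]].
  have -> : (fun w => \sum_(j <- [::] | Pr j) f j w) = cst 0.
    by apply: funext => w; rewrite big_nil.
  by rewrite big_nil expectation_cst; split => //; exact: Lfun_cst.
case: (boolP (Pr a)) => Pa.
  have -> : (fun w => \sum_(j <- a :: s | Pr j) f j w) =
            (f a \+ fun w => \sum_(j <- s | Pr j) f j w).
    by apply: funext => w; rewrite big_cons Pa.
  rewrite big_cons Pa; split; first exact: rpredD.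
  by rewrite expectationD // hm IH2.
have -> : (fun w => \sum_(j <- a :: s | Pr j) f j w) =
            (fun w => \sum_(j <- s | Pr j) f j w).
  by apply: funext => w; rewrite big_cons (negbTE Pa).
by rewrite big_cons (negbTE Pa).
Qed.

Lemma Er_scal (c : R) (g : T -> R) (v : R) : g \in Lfun P 1 ->
  ('E_P[g] = v%:E)%E -> Er P (fun w => c * g w) = c * v.
Proof.
move=> hg hv; rewrite /Er.
have -> : (fun w => c * g w) = c \o* g by apply: funext => w /=; rewrite mulrC.
by rewrite expectationZl // hv.
Qed.

Lemma Er0 : Er P (fun _ => 0) = 0.
Proof. by rewrite /Er (_ : (fun _ => 0) = cst 0) // expectation_cst. Qed.
End E.
Arguments Esum_seq {R d T P I} s Pr {f m}.

Section Main.
Context (R : realType) (d : measure_display) (T : measurableType d)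
  (P : probability T R) (K N : nat)
  (zs : 'I_N -> 'I_K) (Ps : 'I_K -> 'I_K -> R)
  (X : 'I_N -> 'I_N -> T -> R)
  (hint : forall i j, X i j \in Lfun P 1)
  (hE : forall i j, ('E_P[X i j] = (Ps (zs i) (zs j))%:E)%E).

Let M i j := Ps (zs i) (zs j).

Lemma bmuE (z : 'I_N -> 'I_K) i q : bmu P X z i q =
  if Np z q != 0%N then (Np z q)%:R^-1 * \sum_(j in Ip z q) M i j else 0.
Proof.
rewrite /bmu /hmu; case: ifP => _; last exact: Er0.
apply: Er_scal.
  exact: (Esum_seq _ _ (hint i) (hE i)).1.
exact: (Esum_seq _ _ (hint i) (hE i)).2.
Qed.

Lemma bnuE (z : 'I_N -> 'I_K) p j : bnu P X z p j =
  if Np z p != 0%N then (Np z p)%:R^-1 * \sum_(i in Ip z p) M i j else 0.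
Proof.
rewrite /bnu /hnu; case: ifP => _; last exact: Er0.
apply: Er_scal.
  exact: (Esum_seq _ _ (fun i => hint i j) (fun i => hE i j)).1.
exact: (Esum_seq _ _ (fun i => hint i j) (fun i => hE i j)).2.
Qed.

Lemma bPE (z : 'I_N -> 'I_K) p q : bP P X z p q =
  if (Np z p * Np z q != 0)%N then ((Np z p)%:R * (Np z q)%:R)^-1 *
     \sum_(i in Ip z p) \sum_(j in Ip z q) M i j else 0.
Proof.
rewrite /bP /hP; case: ifP => _; last exact: Er0.
have h1 i := (Esum_seq (index_enum 'I_N) (fun j => j \in Ip z q) (hint i) (hE i)).
apply: Er_scal.
  exact: (Esum_seq _ _ (fun i => (h1 i).1) (fun i => (h1 i).2)).1.
exact: (Esum_seq _ _ (fun i => (h1 i).1) (fun i => (h1 i).2)).2.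
Qed.


Lemma Lfinmin (s : seq R) a x : x \in s -> foldr Num.min a s <= x.
Proof.
elim: s => [//|y s IH]; rewrite inE => /orP [/eqP ->|hx] /=.
  by rewrite ge_min lexx.
by rewrite ge_min (IH hx) orbT.
Qed.

Lemma Lfinmax (s : seq R) a B : a <= B -> (forall x, x \in s -> x <= B) ->
  foldr Num.max a s <= B.
Proof.
move=> ha; elim: s => [//|y s IH] hs /=.
rewrite ge_max hs ?mem_head //= IH // => x hx; apply: hs; by rewrite inE hx orbT.
Qed.

Lemma Lfinmax' (s : seq R) B : 0 <= B -> (forall x, x \in s -> x <= B) ->
  foldr Num.max (head 0 s) s <= B.
Proof.
case: s => [//|y s] h0 hs; apply: Lfinmax => //; apply: hs; exact: mem_head.
Qed.

Lemma bmu_row (z : 'I_N -> 'I_K) i j q : zs i = zs j -> bmu P X z i q = bmu P X z j q.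
Proof. by move=> h; rewrite !bmuE /M h. Qed.

Lemma bnu_col (z : 'I_N -> 'I_K) i j q : zs i = zs j -> bnu P X z q i = bnu P X z q j.
Proof. by move=> h; rewrite !bnuE /M h. Qed.

Definition ll (z : 'I_N -> 'I_K) i := \sum_(q < K)
     (`|bmu P X z i q - bP P X z (z i) q| + `|bnu P X z q i - bP P X z q (z i)|).

Lemma ll_ge0 z i : 0 <= ll z i.
Proof. by apply: sumr_ge0 => q _; rewrite addr_ge0. Qed.

Lemma key (z : 'I_N -> 'I_K) i j : zs i = zs j -> z i != z j ->
  bdelta P X z <= ll z i + ll z j.
Proof.
move=> hs hz; rewrite /bdelta /finmin.
have hin : (z i, z j) \in enum [pred pr : 'I_K * 'I_K | pr.1 != pr.2] by rewrite mem_enum inE /=.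
pose F := fun pr : 'I_K * 'I_K => finmax [seq `|bP P X z pr.1 q - bP P X z pr.2 q| + `|bP P X z q pr.1 - bP P X z q pr.2| | q <- enum 'I_K].
apply: le_trans (Lfinmin _ _ _ (map_f F hin)) _.
rewrite /finmax; apply: Lfinmax'; first by rewrite addr_ge0 ?ll_ge0.
move=> x /mapP [q _ ->] /=.
have t1 : `|bP P X z (z i) q - bP P X z (z j) q| <=
   `|bmu P X z i q - bP P X z (z i) q| + `|bmu P X z j q - bP P X z (z j) q|.
  rewrite (bmu_row z i j q hs) (le_trans (ler_distD (bmu P X z j q) _ _)) //.
  by rewrite distrC.
have t2 : `|bP P X z q (z i) - bP P X z q (z j)| <=
   `|bnu P X z q i - bP P X z q (z i)| + `|bnu P X z q j - bP P X z q (z j)|.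
  rewrite (bnu_col z i j q hs) (le_trans (ler_distD (bnu P X z q j) _ _)) //.
  by rewrite distrC.
have s1 k : `|bmu P X z k q - bP P X z (z k) q| + `|bnu P X z q k - bP P X z q (z k)| <= ll z k.
  rewrite /ll (bigD1 q) //= lerDl; apply: sumr_ge0 => q' _; by rewrite addr_ge0.
apply: le_trans (lerD (s1 i) (s1 j)).
apply: le_trans (lerD t1 t2) _; rewrite le_eqVlt; apply/orP; left; apply/eqP; ring.
Qed.

Lemma sumIp (z : 'I_N -> 'I_K) p (f : 'I_N -> R) c :
  (forall j, z j = p -> f j = c) -> \sum_(j in Ip z p) f j = c *+ Np z p.
Proof.
move=> h; rewrite /Np -sumr_const; apply: eq_bigr => j; rewrite inE /= => /eqP hj.
exact: h.
Qed.

Lemma Np_gt0 (z : 'I_N -> 'I_K) i : (0 < Np z (z i))%N.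
Proof. by apply/card_gt0P; exists i; rewrite inE /=. Qed.

Lemma part3 : barL P X zs = 0.
Proof.
rewrite /barL big1 ?mulr0 // => i _; rewrite big1 // => q _.
have h2 : (Np zs (zs i))%:R != 0 :> R by rewrite pnatr_eq0 -lt0n Np_gt0.
have e1 : bmu P X zs i q = bP P X zs (zs i) q.
  rewrite bmuE bPE muln_eq0 (negbTE (lt0n_neq0 (Np_gt0 zs i))) /=.
  case: ifP => hq; last by [].
  rewrite (@sumIp zs q _ (Ps (zs i) q)); last by move=> j hj; rewrite /M hj.
  rewrite (@sumIp zs (zs i) _ (Ps (zs i) q *+ Np zs q)); last first.
    by move=> j hj; apply: sumIp => j' hj'; rewrite /M hj hj'.
  have h1 : (Np zs q)%:R != 0 :> R by rewrite pnatr_eq0.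
  rewrite -[Ps (zs i) q *+ Np zs q]mulr_natr -[Ps (zs i) q * (Np zs q)%:R *+ Np zs (zs i)]mulr_natr.
  move: (Np zs q)%:R (Np zs (zs i))%:R h1 h2 => a b ha hb.
  by field; rewrite ha hb.
have e2 : bnu P X zs q i = bP P X zs q (zs i).
  rewrite bnuE bPE muln_eq0 (negbTE (lt0n_neq0 (Np_gt0 zs i))) orbF.
  case: ifP => hq; last by [].
  rewrite (@sumIp zs q _ (Ps q (zs i))); last by move=> j hj; rewrite /M hj.
  rewrite (@sumIp zs q _ (Ps q (zs i) *+ Np zs (zs i))); last first.
    by move=> j hj; apply: sumIp => j' hj'; rewrite /M hj hj'.
  have h1 : (Np zs q)%:R != 0 :> R by rewrite pnatr_eq0.
  rewrite -[Ps q (zs i) *+ Np zs q]mulr_natr -[Ps q (zs i) *+ Np zs (zs i)]mulr_natr -[Ps q (zs i) * (Np zs (zs i))%:R *+ Np zs q]mulr_natr.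
  move: (Np zs q)%:R (Np zs (zs i))%:R h1 h2 => a b ha hb.
  by field; rewrite ha hb.
by rewrite e1 e2 !subrr normr0 addr0.
Qed.

Lemma sum2 (f : 'I_N -> R) :
  \sum_(i < N) \sum_(j < N) (f i + f j) = 2 * N%:R * \sum_(i < N) f i.
Proof.
have e : forall i : 'I_N, \sum_(j < N) (f i + f j) = f i * N%:R + \sum_(j < N) f j.
  by move=> i; rewrite big_split /= sumr_const card_ord mulr_natr.
rewrite (eq_bigr _ (fun i _ => e i)) big_split /= -mulr_suml sumr_const card_ord.
rewrite -[(\sum_(j < N) f j) *+ N]mulr_natr.
ring.
Qed.
Lemma part1 (hK : (2 <= K)%N) (hN : (1 <= N)%N) (z : 'I_N -> 'I_K) :
  DeltaN zs z * bdelta P X z <= (2 * K%:R) / (K%:R - 1) * barL P X z.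
Proof.
pose S : R := \sum_(i < N) \sum_(j < N) ((zs i == zs j) && (z i != z j))%:R.
pose L : R := \sum_(i < N) ll z i.
have hS : S * bdelta P X z <= 2 * N%:R * L.
  rewrite /S mulr_suml.
  apply: (@le_trans _ _ (\sum_(i < N) \sum_(j < N) (ll z i + ll z j))).
    apply: ler_sum => i _; rewrite mulr_suml; apply: ler_sum => j _.
    case: (boolP ((zs i == zs j) && (z i != z j))) => [/andP [/eqP h1 h2]|_].
      by rewrite mul1r key.
    by rewrite mul0r addr_ge0 ?ll_ge0.
  by rewrite sum2.
have hb : barL P X z = N%:R^-1 * L by [].
rewrite hb /DeltaN -/S.
have hK1 : 0 < K%:R - 1 :> R by rewrite subr_gt0 ltr1n.
have hN0 : 0 < N%:R :> R by rewrite ltr0n.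
rewrite -[X in X <= _]mulrA.
apply: le_trans (ler_wpM2l _ hS) _.
  by apply: divr_ge0; [exact: ler0n | apply: mulr_ge0; [exact: exprn_ge0 (ltW hN0) | exact: ltW]].
move: (K%:R) (N%:R) hK1 hN0 => k n hk hn.
have hk0 : k - 1 != 0 by rewrite gt_eqF.
have hn0 : n != 0 by rewrite gt_eqF.
rewrite le_eqVlt; apply/orP; left; apply/eqP.
by field; rewrite hk0 hn0.
Qed.

Lemma part2 (hK : (2 <= K)%N) (hN : (1 <= N)%N) (z : 'I_N -> 'I_K) :
  0 < bdelta P X z ->
  DeltaN zs z <= (2 * K%:R) / ((K%:R - 1) * bdelta P X z) * barL P X z.
Proof.
move=> hd; rewrite -(ler_pM2r hd); apply: le_trans (part1 hK hN z) _.
have hK1 : 0 < K%:R - 1 :> R by rewrite subr_gt0 ltr1n.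
move: (K%:R) (bdelta P X z) (barL P X z) hK1 hd => k b l hk hb.
have hk0 : k - 1 != 0 by rewrite gt_eqF.
have hb0 : b != 0 by rewrite gt_eqF.
rewrite le_eqVlt; apply/orP; left; apply/eqP.
by field; rewrite hk0 hb0.
Qed.
End Main.

Theorem mainTheorem2 (R : realType) (d : measure_display) (T : measurableType d)
  (P : probability T R) (K N : nat) (hK : (2 <= K)%N) (hN : (1 <= N)%N)
  (zs : 'I_N -> 'I_K) (Ps : 'I_K -> 'I_K -> R)
  (X : 'I_N -> 'I_N -> T -> R)
  (hint : forall i j, X i j \in Lfun P 1)
  (hE : forall i j, ('E_P[X i j] = (Ps (zs i) (zs j))%:E)%E) :
  (forall z : 'I_N -> 'I_K,
     DeltaN zs z * bdelta P X z <= (2 * K%:R) / (K%:R - 1) * barL P X z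
     /\ (0 < bdelta P X z ->
         DeltaN zs z <= (2 * K%:R) / ((K%:R - 1) * bdelta P X z) * barL P X z))
  /\ barL P X zs = 0.
Proof.
split; last by eapply part3; eassumption.
move=> z; split; first by eapply part1; eassumption.
by eapply part2; eassumption.
Qed.
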